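(* Let $a_1,a_2>0$, $e_1,e_2\in[0,1)$ and $E_1,E_2\in\mathbb{R}$. Put $x_i=a_i(\cos E_i-e_i)$, $y_i=a_i\sqrt{1-e_i^2}\,\sin E_i$ for $i=1,2$, and let $R_{AB}^2=(x_1-x_2)^2+(y_1-y_2)^2$ be the squared Euclidean distance. Suppose the ''condition for intersatellite communications'' holds: $$4a_1a_2\sqrt{(1-e_1^2)(1-e_2^2)}\,\sin E_1\sin E_2=a_1^2+a_2^2+(a_2e_2-a_1e_1)^2-\tfrac12\left(e_1^2a_1^2+e_2^2a_2^2\right).$$ Define the squared geodesic distance $$\widetilde R_{AB}^2=\tfrac12(a_1^2+a_2^2)+\tfrac12(a_2e_2-a_1e_1)^2+\tfrac14(a_1^2e_1^2+a_2^2e_2^2)-\left(2e_1a_1^2\cos E_1+2e_2a_2^2\cos E_2\right)-\left(e_1^2a_1^2\sin^2E_1+e_2^2a_2^2\sin^2E_2\right)-2a_1a_2\cos E_1\cos E_2+2a_1a_2\left(e_2\cos E_1+e_1\cos E_2\right).$$ Then $\widetilde R_{AB}^2\ge R_{AB}^2$.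
   Context: The points $(x_i,y_i)$ are positions of two satellites on coplanar Kepler ellipses with semi-major axes $a_i$, eccentricities $e_i$ and eccentric anomaly angles $E_i$, parametrized as stated. The quantity $\widetilde R_{AB}^2$ is what the paper calls the (square of the) geodesic distance; it is given explicitly by the displayed formula. *)

(* Defs.v *)
From Stdlib Require Import Reals.
Open Scope R_scope.

(* Position of a satellite on a Kepler ellipse with semi-major axis a,
   eccentricity e, eccentric anomaly E. *)
Definition kx (a e E : R) : R := a * (cos E - e).
Definition ky (a e E : R) : R := a * sqrt (1 - e ^ 2) * sin E.

Definition RAB2 (a1 e1 E1 a2 e2 E2 : R) : R :=
  (kx a1 e1 E1 - kx a2 e2 E2) ^ 2 + (ky a1 e1 E1 - ky a2 e2 E2) ^ 2.

Definition comm_condition (a1 e1 E1 a2 e2 E2 : R) : Prop :=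
  4 * a1 * a2 * sqrt ((1 - e1 ^ 2) * (1 - e2 ^ 2)) * sin E1 * sin E2 =
  a1 ^ 2 + a2 ^ 2 + (a2 * e2 - a1 * e1) ^ 2
  - / 2 * (e1 ^ 2 * a1 ^ 2 + e2 ^ 2 * a2 ^ 2).

Definition RAB2_geo (a1 e1 E1 a2 e2 E2 : R) : R :=
  / 2 * (a1 ^ 2 + a2 ^ 2) + / 2 * (a2 * e2 - a1 * e1) ^ 2
  + / 4 * (a1 ^ 2 * e1 ^ 2 + a2 ^ 2 * e2 ^ 2)
  - (2 * e1 * a1 ^ 2 * cos E1 + 2 * e2 * a2 ^ 2 * cos E2)
  - (e1 ^ 2 * a1 ^ 2 * (sin E1) ^ 2 + e2 ^ 2 * a2 ^ 2 * (sin E2) ^ 2)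
  - 2 * a1 * a2 * cos E1 * cos E2
  + 2 * a1 * a2 * (e2 * cos E1 + e1 * cos E2).

(* Main.v *)
Require Import Defs.
From Stdlib Require Import Reals Lra.
Open Scope R_scope.

Theorem mainTheorem1 (a1 a2 e1 e2 E1 E2 : R) :
  0 < a1 -> 0 < a2 ->
  0 <= e1 < 1 -> 0 <= e2 < 1 ->
  comm_condition a1 e1 E1 a2 e2 E2 ->
  RAB2_geo a1 e1 E1 a2 e2 E2 >= RAB2 a1 e1 E1 a2 e2 E2.
Proof.
  intros ha1 ha2 [he1 he1'] [he2 he2'] H.
  unfold comm_condition, RAB2_geo, RAB2, kx, ky in *.
  assert (p1 : 0 <= 1 - e1 ^ 2) by nra.
  assert (p2 : 0 <= 1 - e2 ^ 2) by nra.
  rewrite sqrt_mult in H by assumption.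
  set (b1 := sqrt (1 - e1 ^ 2)) in *.
  set (b2 := sqrt (1 - e2 ^ 2)) in *.
  assert (hb1 : b1 * b1 = 1 - e1 ^ 2) by (apply sqrt_sqrt; exact p1).
  assert (hb2 : b2 * b2 = 1 - e2 ^ 2) by (apply sqrt_sqrt; exact p2).
  assert (t1 := sin2_cos2 E1). assert (t2 := sin2_cos2 E2).
  unfold Rsqr in t1, t2.
  assert (k1 : a1^2 * sin E1 ^2 * (b1*b1) = a1^2 * sin E1^2 * (1 - e1^2)) by (rewrite hb1; ring).
  assert (k2 : a2^2 * sin E2 ^2 * (b2*b2) = a2^2 * sin E2^2 * (1 - e2^2)) by (rewrite hb2; ring).
  assert (l1 : a1^2 * (sin E1 * sin E1 + cos E1 * cos E1) = a1^2) by (rewrite t1; ring).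
  assert (l2 : a2^2 * (sin E2 * sin E2 + cos E2 * cos E2) = a2^2) by (rewrite t2; ring).
  lra.
Qed.
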